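(* Let $q$ be a power of an odd prime, write $q-1=2^s r$ with $r$ odd, let $a\in\mathbb{F}_q^*$ with $a\neq\pm1$, and let $f(X)=X^{q+1}+aX^2$ on $\mathbb{F}_{q^2}$. Note $f(\mathbb{F}_q)\subseteq\mathbb{F}_q$ and $f|_{\mathbb{F}_q}(x)=(a+1)x^2$. Suppose $\chi_2(1-a^2)=1$. Then the union of the connected components of the functional graph of $f$ over $\mathbb{F}_{q^2}$ that contain elements of $\mathbb{F}_q$ is obtained from the functional graph $\mathscr{G}(f|_{\mathbb{F}_q})$ of $x\mapsto(a+1)x^2$ on $\mathbb{F}_q$ by attaching, to every vertex $\alpha\in\mathbb{F}_q$ with $\chi_2(\alpha(a-1))=-1$, two new vertices each having an edge directed to $\alpha$ (and these new vertices have no preimages). In particular, $0$ is a fixed point whose connected component is $\{0\}$ alone, and $\frac{1}{a+1}$ is a fixed point whose connected component consists, if $s=1$, of $\frac1{a+1}$ together with exactly three other vertices each directed to $\frac{1}{a+1}$ and each having no preimage, and, if $s\ge2$, is isomorphic to $(Cyc(1),\mathscr{T}(s+1))$.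
   Context: $\chi_2$ is the quadratic character of $\mathbb{F}_q$: $\chi_2(\alpha)=1$ if $\alpha$ is a nonzero square, $-1$ if $\alpha$ is a nonsquare, $0$ if $\alpha=0$. The functional graph of a map $g$ on a finite set $S$ is the directed graph with vertex set $S$ and edges $x\to g(x)$. $Cyc(1)$ is a vertex with a loop. $\mathscr{T}(1)$ is the tree with two vertices $P_1,P$ and the edge $P_1\to P$ (root $P$); for $m\ge1$, $\mathscr{T}(m+1)$ is obtained from $\mathscr{T}(m)$ by attaching two new vertices, each with an edge directed to it, to every vertex of the last (top) level of $\mathscr{T}(m)$. $(Cyc(1),\mathscr{T}(m))$ is the fixed vertex with a copy of $\mathscr{T}(m)$ whose root is that vertex. *)

(* Defs.v *)
From HB Require Import structures.
From mathcomp Require Import all_boot all_order all_algebra.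
Set Implicit Arguments. Unset Strict Implicit. Unset Printing Implicit Defensive.
Import Order.TTheory GRing.Theory Num.Theory.
Local Open Scope ring_scope.

Definition inFq (L : finFieldType) (q : nat) (x : L) : bool := x ^+ q == x.

(* Quadratic character of F_q, evaluated on elements of F_q (viewed inside L):
   1 on nonzero squares OF F_q, -1 on nonsquares of F_q, 0 at 0. *)
Definition chi2 (L : finFieldType) (q : nat) (x : L) : int :=
  if x == 0 then 0%R
  else if [exists b : L, inFq q b && (b ^+ 2 == x)] then 1%R else (-1)%R.

Definition fcomp (L : finType) (g : L -> L) (x y : L) : bool :=
  connect [rel u v | (g u == v) || (g v == u)] x y.

(* Model of (Cyc(1), T(m)) for m >= 1.
   Vertices: None = the root P (carrying the loop);
   Some w with w : seq bool, size w < m : Some [::] = P_1 (level 1),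
   Some w with size w = k is at level k+1 (the two children of Some w are
   Some (true :: w) and Some (false :: w)). *)
Definition cycT_vert (m : nat) (v : option (seq bool)) : bool :=
  if v is Some w then (size w < m)%N else true.

Definition cycT_map (v : option (seq bool)) : option (seq bool) :=
  match v with
  | None => None
  | Some [::] => None
  | Some (_ :: w) => Some w
  end.

Definition iso_cycT (L : finType) (g : L -> L) (C : pred L) (m : nat) : Prop :=
  exists phi : option (seq bool) -> L,
    [/\ {in cycT_vert m &, injective phi},
        (forall v, cycT_vert m v -> C (phi v)),
        (forall y, C y -> exists2 v, cycT_vert m v & phi v = y) &
        (forall v, cycT_vert m v -> phi (cycT_map v) = g (phi v))].

(* Main.v *)
Require Import Defs.
From HB Require Import structures.
From mathcomp Require Import all_boot all_order all_algebra all_fingroup all_solvable all_field.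
From mathcomp Require Import ring zify.
Import Order.TTheory GRing.Theory Num.Theory.
Local Open Scope ring_scope.
Set Implicit Arguments. Unset Strict Implicit.

Section Base.
Variables (L : finFieldType) (q : nat).
Hypotheses (qodd : odd q) (cardL : #|L| = (q ^ 2)%N).

Lemma pnat_q : [pchar L].-nat q.
Proof.
have [p pp pc] := finPcharP L.
have ab := fin_ring_pchar_abelem pc.
have /= := abelem_pgroup ab; rewrite /pgroup cardsT cardL => h.
rewrite (eq_pnat _ (pcharf_eq pc)).
by apply: pnat_dvd h; rewrite dvdn_mull.
Qed.

Lemma frD (x y : L) : (x + y) ^+ q = x ^+ q + y ^+ q.
Proof. exact: exprDn_pchar pnat_q. Qed.

Lemma two_neq0 : (2%:R : L) != 0.
Proof.
apply/negP => /eqP h2.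
have [p pp pc] := finPcharP L.
have p2 : (2 \in [pchar L]) by rewrite inE /= h2 eqxx.
have := pnat_q; rewrite (eq_pnat _ (pcharf_eq p2)) => /p_natP [k hk].
move: qodd; rewrite hk; case: k hk => [|k] hk; last by rewrite expnS oddM.
move=> _; have := finNzRing_gt1 L; by rewrite cardL hk.
Qed.

Lemma q_gt0 : (0 < q)%N.
Proof. by case: q qodd. Qed.




Lemma frob2 (x : L) : (x ^+ q) ^+ q = x.
Proof. by rewrite -exprM mulnn -cardL expf_card. Qed.

Lemma q_gt1 : (1 < q)%N.
Proof.
have := finNzRing_gt1 L; rewrite cardL.
case: q => [|[|n]] //.
Qed.

Lemma Fq0 : inFq q (0 : L).
Proof. by rewrite /inFq expr0n gtn_eqF ?q_gt0. Qed.
Lemma Fq1 : inFq q (1 : L).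
Proof. by rewrite /inFq expr1n. Qed.
Lemma FqD (x y : L) : inFq q x -> inFq q y -> inFq q (x + y).
Proof. by rewrite /inFq frD => /eqP-> /eqP->. Qed.
Lemma frN (x : L) : (- x) ^+ q = - x ^+ q.
Proof.
apply/eqP; rewrite -subr_eq0 opprK; apply/eqP.
by rewrite addrC -frD addrN expr0n gtn_eqF ?q_gt0.
Qed.
Lemma FqN (x : L) : inFq q x -> inFq q (- x).
Proof. by rewrite /inFq frN => /eqP->. Qed.
Lemma FqM (x y : L) : inFq q x -> inFq q y -> inFq q (x * y).
Proof. by rewrite /inFq exprMn => /eqP-> /eqP->. Qed.
Lemma FqV (x : L) : inFq q x -> inFq q (x^-1).
Proof. by rewrite /inFq exprVn => /eqP->. Qed.
Lemma FqX (x : L) n : inFq q x -> inFq q (x ^+ n).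
Proof. by rewrite /inFq exprAC => /eqP->. Qed.
Lemma FqB (x y : L) : inFq q x -> inFq q y -> inFq q (x - y).
Proof. by move=> hx hy; apply: FqD => //; apply: FqN. Qed.
Lemma FqMl (x y : L) : inFq q x -> inFq q y -> inFq q (x / y).
Proof. by move=> hx hy; apply: FqM => //; apply: FqV. Qed.
Lemma Fqn n : inFq q (n%:R : L).
Proof.
elim: n => [|n IH]; first exact: Fq0.
by rewrite -addn1 natrD; apply: FqD => //; apply: Fq1.
Qed.

Lemma xeqN (x : L) : x = - x -> x = 0.
Proof.
move=> h; have: 2%:R * x = 0 by rewrite mulr_natl mulr2n; rewrite {1}h addNr.
by move/eqP; rewrite mulf_eq0 (negbTE two_neq0) /= => /eqP.
Qed.

Lemma sq_cases (x y : L) : x ^+ 2 = y ^+ 2 -> x = y \/ x = - y.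
Proof. by move/eqP; rewrite eqf_sqr => /orP [] /eqP; [left|right]. Qed.

Lemma Npm (x : L) : x ^+ q = - x -> x != 0 -> ~~ inFq q x.
Proof.
move=> h nz; apply/negP; rewrite /inFq h => /eqP e.
by rewrite (xeqN (esym e)) eqxx in nz.
Qed.

Definition Nq := (#|L|.-1)%N.

Lemma Nq_eq : Nq = (q.-1 * q.+1)%N.
Proof.
rewrite /Nq cardL; have := q_gt1; case: q => // n _.
rewrite expnS expn1 /=; nia.
Qed.

Lemma prim_gen : exists g : L, Nq.-primitive_root g.
Proof.
have Ngt0 : (0 < Nq)%N by rewrite Nq_eq muln_gt0 /=; have := q_gt1; case: q => [|[|]].
have h1 : all Nq.-unity_root (enum [pred x : L | x != 0]).
  apply/allP => x; rewrite mem_enum inE => nz.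
  rewrite unity_rootE; apply/eqP; apply: (mulIf nz).
  by rewrite mul1r -exprSr /Nq prednK ?expf_card // (ltn_trans _ (finNzRing_gt1 L)).
have h3 : (Nq <= size (enum [pred x : L | x != 0%R]))%N.
  by rewrite -cardE cardC1.
have /hasP := has_prim_root Ngt0 h1 (enum_uniq _) h3.
case=> g _ hg; exists g; exact hg.
Qed.

Lemma S1 (t : L) : inFq q t -> t != 0 -> exists y, y ^+ 2 = t.
Proof.
move=> ht nz; have [g hg] := prim_gen.
have tN : t ^+ Nq = 1.
  apply: (mulIf nz); rewrite mul1r -exprSr /Nq prednK ?expf_card //.
  exact: (ltn_trans _ (finNzRing_gt1 L)).
have [[k kN] ek] := prim_rootP hg tN; rewrite /= in ek.
have tq1 : t ^+ q.-1 = 1.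
  apply: (mulIf nz); rewrite mul1r -exprSr prednK ?q_gt0 //; exact/eqP.
have : (Nq %| k * q.-1)%N by rewrite (prim_order_dvd hg) exprM -ek tq1.
rewrite Nq_eq [(k * _)%N]mulnC dvdn_pmul2l; last by have := q_gt1; case: q => [|[|]].
move=> hk; have h2 : (2 %| k)%N.
  by apply: dvdn_trans hk; rewrite dvdn2 /= negbK.
exists (g ^+ (k %/ 2)); rewrite -exprM ek; congr (_ ^+ _).
by rewrite divnK.
Qed.

End Base.

Definition ff (L : finFieldType) (q : nat) (a : L) (x : L) := x ^+ q.+1 + a * x ^+ 2.

Lemma closedP (L : finFieldType) (g : L -> L) (A : pred L) :
  (forall x, A x = A (g x)) -> forall x y, fcomp g x y -> A x = A y.
Proof.
move=> h x y hc.
have cl : closed [rel u v | (g u == v) || (g v == u)] A.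
  by move=> u v /= /orP [] /eqP <-; rewrite -!topredE /= -h.
exact: (closed_connect cl hc).
Qed.

Lemma fcomp_sym (L : finFieldType) (g : L -> L) x y : fcomp g x y = fcomp g y x.
Proof.
by apply: sym_connect_sym => u v /=; rewrite orbC.
Qed.

Lemma fcomp_edge (L : finFieldType) (g : L -> L) x : fcomp g x (g x).
Proof. by apply: connect1 => /=; rewrite eqxx. Qed.

Lemma fcomp_trans (L : finFieldType) (g : L -> L) x y z :
  fcomp g x y -> fcomp g y z -> fcomp g x z.
Proof. exact: connect_trans. Qed.

Lemma chi2_negE (L : finFieldType) q (t : L) : chi2 q t = -1 ->
  t != 0 /\ forall b, inFq q b -> b ^+ 2 != t.
Proof.
rewrite /chi2; case: eqP => // _.
case: existsP => // hn _; split => // b hb; apply/negP => e.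
by apply: hn; exists b; rewrite hb e.
Qed.

Lemma chi2_neg (L : finFieldType) q (t : L) :
  t != 0 -> (forall b, inFq q b -> b ^+ 2 != t) -> chi2 q t = -1.
Proof.
rewrite /chi2 => nz h; rewrite (negbTE nz).
case: existsP => // -[b /andP [hb e]].
by have := h b hb; rewrite e.
Qed.

Lemma chi2_posE (L : finFieldType) q (t : L) : chi2 q t = 1 ->
  exists b, inFq q b /\ b ^+ 2 = t.
Proof.
rewrite /chi2; case: eqP => // _.
by case: existsP => // -[b /andP [hb /eqP e]] _; exists b.
Qed.

Local Open Scope nat_scope.
Fixpoint mw (w : seq bool) : nat :=
  match w with [::] => 1 | b :: w' => mw w' + b * 2 ^ (size w').+1 end.

Lemma mw_odd w : odd (mw w).
Proof.
elim: w => //= b w IH; rewrite oddD IH oddM oddX /=.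
by case: b.
Qed.

Lemma mw_lt w : mw w < 2 ^ (size w).+1.
Proof.
elim: w => //= b w IH; rewrite [2 ^ (size w).+2]expnS.
move: IH; set X := 2 ^ (size w).+1; case: b => /=; lia.
Qed.

Lemma mw_inj w1 w2 : size w1 = size w2 -> mw w1 = mw w2 -> w1 = w2.
Proof.
elim: w1 w2 => [|b1 w1 IH] [|b2 w2] //= [hs].
have l1 := mw_lt w1; have l2 := mw_lt w2; rewrite -hs in l2.
rewrite -hs; set X := 2 ^ (size w1).+1 in l1 l2 *.
case: b1; case: b2 => /= e.
- by rewrite (IH w2 hs) //; lia.
- lia.
- lia.
- by rewrite (IH w2 hs) //; lia.
Qed.

Lemma mw_surj k m : odd m -> m < 2 ^ k.+1 -> exists w, size w = k /\ mw w = m.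
Proof.
elim: k m => [|k IH] m om lm.
  by exists [::]; split => //=; move: om lm; case: m => [|[|]].
have [lt|ge] := ltnP m (2 ^ k.+1).
  have [w [sw mwm]] := IH m om lt.
  by exists (false :: w); rewrite /= sw mwm; split => //; lia.
have om' : odd (m - 2 ^ k.+1) by rewrite oddB // om oddX.
have lm' : m - 2 ^ k.+1 < 2 ^ k.+1 by move: lm; rewrite [2 ^ k.+2]expnS; lia.
have [w [sw mwm]] := IH _ om' lm'.
by exists (true :: w); rewrite /= sw mwm; split => //; lia.
Qed.

Lemma pow_odd_eq e1 e2 m1 m2 : odd m1 -> odd m2 ->
  2 ^ e1 * m1 = 2 ^ e2 * m2 -> e1 = e2 /\ m1 = m2.
Proof.
wlog h : e1 e2 m1 m2 / e1 <= e2.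
  move=> H o1 o2 e; have [le|lt] := leqP e1 e2; first exact: H.
  by have [] := H e2 e1 m2 m1 (ltnW lt) o2 o1 (esym e).
move=> o1 o2; rewrite -(subnKC h) expnD -mulnA => /eqP.
rewrite eqn_pmul2l ?expn_gt0 // => /eqP e.
have : e2 - e1 = 0.
  apply/eqP; move: o1; rewrite e oddM oddX o2 andbT.
  by case: (e2 - e1).
by move=> z; move: e; rewrite z expn0 mul1n => ->; split => //; lia.
Qed.

Definition Ev (s : nat) (v : option (seq bool)) : nat :=
  if v is Some w then 2 ^ (s - size w) * mw w else 0.

Lemma E_lt s v : cycT_vert s.+1 v -> Ev s v < 2 ^ s.+1.
Proof.
case: v => [w|] /=; last by rewrite expn_gt0.
move=> hw.
have -> : 2 ^ s.+1 = 2 ^ (s - size w) * 2 ^ (size w).+1.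
  by rewrite -expnD; congr (_ ^ _); lia.
by rewrite ltn_pmul2l ?expn_gt0 // mw_lt.
Qed.

Lemma E_map s v : cycT_vert s.+1 v ->
  Ev s (cycT_map v) = 2 * Ev s v %[mod 2 ^ s.+1].
Proof.
case: v => [w|] //=; case: w => [|b w] /= hw.
  by rewrite subn0 muln1 -expnS modnn mod0n.
have hk : size w < s by lia.
rewrite -(subnSK hk) expnS -!mulnA !mulnDr.
have -> : 2 * (2 ^ (s - (size w).+1) * (b * 2 ^ (size w).+1)) = b * 2 ^ s.+1.
  have E2 : 2 * 2 ^ (s - (size w).+1) * 2 ^ (size w).+1 = 2 ^ s.+1.
    by rewrite -expnS -expnD; congr (2 ^ _); lia.
  rewrite -E2; lia.
by rewrite [X in _ = X %[mod _]]addnC modnMDl mulnA -expnS.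
Qed.

Lemma E_inj s v1 v2 : cycT_vert s.+1 v1 -> cycT_vert s.+1 v2 ->
  Ev s v1 = Ev s v2 -> v1 = v2.
Proof.
have pos w : 0 < 2 ^ (s - size w) * mw w.
  by rewrite muln_gt0 expn_gt0 /=; case: (mw w) (mw_odd w).
case: v1 => [w1|]; case: v2 => [w2|] //= h1 h2.
- case/(pow_odd_eq (mw_odd _) (mw_odd _)) => e m.
  by rewrite (mw_inj _ m) //; lia.
- by move=> e; move: (pos w1); rewrite e.
- by move=> e; move: (pos w2); rewrite -e.
Qed.

Lemma E_surj s i : i < 2 ^ s.+1 -> exists2 v, cycT_vert s.+1 v & Ev s v = i.
Proof.
move=> hi; have [->|ip] := posnP i; first by exists None.
have [m cm ei] := pfactor_coprime (isT : prime 2) ip.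
set e := logn 2 i in ei.
rewrite coprime2n in cm.
have he : e <= s.
  have : 2 ^ e <= i by apply: dvdn_leq => //; rewrite {1}ei dvdn_mull.
  move=> h; have : 2 ^ e < 2 ^ s.+1 by apply: leq_ltn_trans h hi.
  by rewrite ltn_exp2l.
have lm : m < 2 ^ (s - e).+1.
  have : m * 2 ^ e < 2 ^ (s - e).+1 * 2 ^ e by rewrite -ei -expnD; congr (_ < 2 ^ _) : hi; lia.
  by rewrite ltn_pmul2r ?expn_gt0.
have [w [sw mwm]] := mw_surj cm lm.
exists (Some w); first by rewrite /= sw; lia.
by rewrite /= sw mwm subKn // mulnC.
Qed.

Local Open Scope ring_scope.

Section Main.
Variables (L : finFieldType) (q : nat) (a b0 : L).
Hypotheses (qodd : odd q) (cardL : #|L| = (q ^ 2)%N) (aFq : inFq q a)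
  (a0 : a != 0) (a1 : a != 1) (am1 : a != -1) (b0Fq : inFq q b0)
  (b0sq : b0 ^+ 2 = 1 - a ^+ 2).
Variables (s r : nat).
Hypotheses (rodd : odd r) (qsr : q.-1 = (2 ^ s * r)%N).

Local Notation f := (ff q a).
Local Notation Fq := (inFq q).

Lemma fE x : f x = x ^+ q * x + a * x ^+ 2.
Proof. by rewrite /ff exprSr. Qed.

Lemma f_pow x : (f x) ^+ q = x * x ^+ q + a * (x ^+ q) ^+ 2.
Proof.
by rewrite fE (frD cardL) !exprMn (frob2 cardL) (eqP aFq) expr2.
Qed.

Lemma f_Fq x : Fq x -> f x = (a + 1) * x ^+ 2.
Proof. by move=> /eqP h; rewrite fE h; ring. Qed.

Lemma f_anti x : x ^+ q = - x -> f x = (a - 1) * x ^+ 2.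
Proof. by move=> h; rewrite fE h; ring. Qed.

Lemma Fq_f x : Fq (f x) = (x ^+ q == x) || (x ^+ q == - x).
Proof.
rewrite /inFq f_pow fE mulrC (inj_eq (addrI _)) (inj_eq (mulfI a0)).
by rewrite eqf_sqr.
Qed.

Lemma f0 : f 0 = 0.
Proof. by rewrite /ff !expr0n /=; ring. Qed.

Lemma ap1 : a + 1 != 0.
Proof. by rewrite addr_eq0. Qed.
Lemma am1' : a - 1 != 0.
Proof. by rewrite subr_eq0. Qed.

Lemma NP y z : y ^+ q = - y -> y != 0 -> f z != y.
Proof.
move=> hy nz; apply/eqP => hf.
set w := z ^+ q.
have z0 : z != 0.
  by apply/eqP => z0; move: nz; rewrite -hf z0 f0 eqxx.
have e1 : (f z) ^+ q = - f z by rewrite hf.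
rewrite f_pow fE -/w in e1.
have e2 : (a * w + z) ^+ 2 = (b0 * z) ^+ 2.
  rewrite exprMn b0sq.
  have : (a * w + z) ^+ 2 - (1 - a ^+ 2) * z ^+ 2 =
     a * ((z * w + a * w ^+ 2) + (w * z + a * z ^+ 2)) by ring.
  by rewrite e1 addNr mulr0 => /eqP; rewrite subr_eq0 => /eqP.
have [k [kF wk]] : exists k, Fq k /\ w = k * z.
  case: (sq_cases e2) => e3.
    exists ((b0 - 1) / a); split.
      by apply: FqMl => //; apply: (FqB qodd cardL) => //; apply: Fq1.
    have h : a * w = (b0 - 1) * z by rewrite mulrBl mul1r -e3 addrK.
    by rewrite mulrAC -h mulrC mulKf.
  exists ((- b0 - 1) / a); split.
    by apply: FqMl => //; apply: (FqB qodd cardL) => //; [apply: (FqN qodd cardL)|apply: Fq1].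
  have h : a * w = (- b0 - 1) * z by rewrite mulrBl mul1r mulNr -e3 addrK.
  by rewrite mulrAC -h mulrC mulKf.
have e4 : z = k ^+ 2 * z.
  by rewrite -{1}(frob2 cardL z) -/w wk exprMn (eqP kF) -/w wk mulrA.
have : k ^+ 2 = 1.
  by apply: (mulIf z0); rewrite mul1r -e4.
move/eqP; rewrite sqrf_eq1 => hk.
have : Fq (f z).
  rewrite Fq_f -/w wk; case/orP: hk => /eqP ->; rewrite ?mul1r ?mulN1r eqxx ?orbT //.
rewrite hf /inFq hy => /eqP e.
by move: nz; rewrite (xeqN qodd cardL (esym e)) eqxx.
Qed.


Lemma pre0 z : f z = 0 -> z = 0.
Proof.
move=> h.
have : Fq (f z) by rewrite h; apply: Fq0.
rewrite Fq_f => /orP [] /eqP hz.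
  move: h; rewrite f_Fq /inFq ?hz // => /eqP; rewrite mulf_eq0 (negbTE ap1) /=.
  by rewrite expf_eq0 /= => /eqP.
move: h; rewrite f_anti // => /eqP; rewrite mulf_eq0 (negbTE am1') /=.
by rewrite expf_eq0 /= => /eqP.
Qed.

Lemma Fq_ff x : Fq x -> Fq (f x).
Proof.
move=> h; rewrite f_Fq //; apply: FqM; last exact: FqX.
by apply: (FqD cardL) => //; apply: Fq1.
Qed.

Lemma clos_step x : Fq (f x) = Fq (f (f x)).
Proof.
apply/idP/idP; first exact: Fq_ff.
rewrite Fq_f => /orP [] /eqP h; first by rewrite /inFq h.
have [->|nz] := eqVneq (f x) 0; first exact: Fq0.
by have := @NP _ x h nz; rewrite eqxx.
Qed.

Lemma nsq_root (t y : L) : Fq t -> y ^+ 2 = t -> ~~ Fq y -> y ^+ q = - y.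
Proof.
move=> ht hy nF.
have : (y ^+ q) ^+ 2 = y ^+ 2 by rewrite exprAC hy (eqP ht).
case/sq_cases => // e.
by rewrite /inFq e eqxx in nF.
Qed.

Lemma nsq_notFq (t y : L) : (forall b, Fq b -> b ^+ 2 != t) -> y ^+ 2 = t -> ~~ Fq y.
Proof.
move=> h hy; apply/negP => hF.
by have := h y hF; rewrite hy eqxx.
Qed.

Lemma item2 (y : L) : (exists x, Fq x /\ fcomp f x y) -> ~~ Fq y ->
  [/\ Fq (f y), chi2 q (f y * (a - 1)) = -1 & forall z, f z != y].
Proof.
move=> [x [hx hc]] nF.
have hfy : Fq (f y).
  by rewrite -(closedP clos_step hc) Fq_ff.
have hy : y ^+ q = - y.
  move: hfy; rewrite Fq_f => /orP [] /eqP // e.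
  by rewrite /inFq e eqxx in nF.
have y0 : y != 0 by apply: contraNneq nF => ->; apply: Fq0.
split => //; last by move=> z; apply: NP.
apply: chi2_neg.
  by rewrite f_anti // !mulf_neq0 // ?am1' // expf_neq0.
move=> b hb; apply/eqP => e.
have : (b / (a - 1)) ^+ 2 = y ^+ 2.
  rewrite expr_div_n e f_anti //; field; exact: am1'.
case/sq_cases => e2; move: nF.
  by rewrite -e2 FqMl // (FqB qodd cardL) // Fq1.
by rewrite -[y]opprK -e2 (FqN qodd cardL) // FqMl // (FqB qodd cardL) // Fq1.
Qed.

Lemma item3 (al : L) : Fq al -> chi2 q (al * (a - 1)) = -1 ->
  #|[set y | ~~ Fq y & f y == al]| = 2%N.
Proof.
move=> hal /chi2_negE [nz hns].
have am : Fq (a - 1) by rewrite (FqB qodd cardL) // Fq1.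
set t := al / (a - 1).
have tF : Fq t by rewrite FqMl.
have t0 : t != 0 by rewrite mulf_neq0 // ?invr_eq0 ?am1' //; move: nz; rewrite mulf_eq0 negb_or => /andP [].
have tns : forall b, Fq b -> b ^+ 2 != t.
  move=> b hb; apply/eqP => e; have := hns (b * (a - 1)) (FqM hb am).
  by rewrite exprMn e /t; apply/negP; rewrite negbK; apply/eqP; field; exact: am1'.
have [y0 hy0] := S1 qodd cardL tF t0.
have -> : [set y | ~~ Fq y & f y == al] = [set y0; - y0].
  apply/setP => y; rewrite !inE.
  apply/andP/orP.
    move=> [nF /eqP hf].
    have : Fq (f y) by rewrite hf.
    rewrite Fq_f => /orP [] /eqP e; first by rewrite /inFq e eqxx in nF.
    move: hf; rewrite f_anti // => hf.
    have : y ^+ 2 = y0 ^+ 2 by rewrite hy0 /t -hf; field; exact: am1'.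
    by case/sq_cases => ->; [left|right].
  move=> hy.
  have hy2 : y ^+ 2 = t by case: hy => /eqP ->; rewrite ?sqrrN hy0.
  have nF := nsq_notFq tns hy2.
  split => //; rewrite f_anti ?(nsq_root tF hy2 nF) // hy2 /t; apply/eqP; field; exact: am1'.
rewrite cards2; suff : y0 != - y0 by move=> ->.
apply/eqP => e; move: t0; rewrite -hy0 (xeqN qodd cardL e) expr0n /= eqxx //.
Qed.


Lemma item4 : f 0 = 0 /\ forall y, fcomp f 0 y -> y = 0.
Proof.
split; first exact: f0.
move=> y hc.
have h : forall x, (x == 0) = (f x == 0).
  move=> x; apply/eqP/eqP; first by move=> ->; apply: f0.
  exact: pre0.
by have := closedP h hc; rewrite eqxx => /esym /eqP.
Qed.

Local Notation cc := ((a + 1)^-1).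

Lemma cFq : Fq cc.
Proof. by apply: FqV; apply: (FqD cardL) => //; apply: Fq1. Qed.

Lemma c0 : cc != 0.
Proof. by rewrite invr_eq0 ap1. Qed.

Lemma fc : f cc = cc.
Proof. by rewrite f_Fq ?cFq // expr2 mulrA mulfV ?ap1 // mul1r. Qed.

Lemma neq_Fq (x y : L) : Fq x -> ~~ Fq y -> x != y.
Proof. by move=> hx hy; apply: contraNneq hy => <-. Qed.

Lemma b00 : b0 != 0.
Proof.
apply/eqP => e; move: b0sq; rewrite e expr0n /= => /eqP.
rewrite eq_sym subr_eq0 eq_sym sqrf_eq1.
by rewrite (negbTE a1) (negbTE am1).
Qed.

Lemma preFq z : Fq (f z) ->
  (Fq z /\ f z = (a + 1) * z ^+ 2) \/ (z ^+ q = - z /\ f z = (a - 1) * z ^+ 2).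
Proof.
rewrite Fq_f => /orP [] /eqP h.
  by left; split; [rewrite /inFq h | apply: f_Fq; rewrite /inFq h].
by right; split => //; apply: f_anti.
Qed.

Section Sone.
Hypothesis s1 : s = 1%N.

Lemma qr : q.-1 = (2 * r)%N.
Proof. by rewrite qsr s1 expn1. Qed.

Lemma m1_nsq (b : L) : Fq b -> b ^+ 2 != -1.
Proof.
move=> hb; apply/eqP => e.
have b0' : b != 0 by apply/eqP => z; move: e; rewrite z expr0n /= => /eqP; rewrite eq_sym oppr_eq0 oner_eq0.
have h1 : b ^+ q.-1 = 1.
  apply: (mulIf b0'); rewrite mul1r -exprSr prednK ?(q_gt1 cardL) ?(ltnW (q_gt1 cardL)) //; exact/eqP.
move: h1; rewrite qr exprM e -signr_odd rodd expr1 => e1.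
by move: (oner_neq0 L); rewrite (xeqN qodd cardL (esym e1)) eqxx.
Qed.


Lemma item6 : exists y1 y2 y3 : L,
  [/\ uniq [:: cc; y1; y2; y3],
      (forall y, fcomp f cc y = (y \in [:: cc; y1; y2; y3])),
      [/\ f y1 = cc, f y2 = cc & f y3 = cc] &
      (forall z, [/\ f z != y1, f z != y2 & f z != y3])].
Proof.
have cF := cFq; have cnz := c0; have hap := ap1; have ham := am1'.
have am : Fq (a - 1) by rewrite (FqB qodd cardL) // Fq1.
have cc2 : (a + 1) * cc ^+ 2 = cc by rewrite -f_Fq // fc.
set t := cc / (a - 1).
have tF : Fq t by rewrite FqMl.
have t0 : t != 0 by rewrite mulf_neq0 // invr_eq0.
have ct : (a - 1) * t = cc by rewrite /t mulrC mulfVK.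
have tns : forall b, Fq b -> b ^+ 2 != t.
  move=> b hb; apply/eqP => e.
  have := m1_nsq (FqM hb b0Fq); rewrite exprMn e b0sq /t.
  move/eqP; apply; field; rewrite ?ap1 ?am1' //.
have [d hd] := S1 qodd cardL tF t0.
have dnF := nsq_notFq tns hd.
have dq := nsq_root tF hd dnF.
have d0 : d != 0 by apply: contraNneq t0 => e; rewrite -hd e expr0n.
have mdnF : ~~ Fq (- d) by apply: contra dnF => h; rewrite -[d]opprK (FqN qodd cardL).
have mdq : (- d) ^+ q = - - d by rewrite (frN qodd cardL) dq.
have md0 : - d != 0 by rewrite oppr_eq0.
have fd : f d = cc by rewrite f_anti // hd.
have fmd : f (- d) = cc by rewrite f_anti // sqrrN hd.
have fmc : f (- cc) = cc by rewrite f_Fq ?(FqN qodd cardL) // sqrrN.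
have pre : forall z, f z = cc \/ f z = - cc -> f z = cc /\ (z \in [:: cc; - cc; d; - d]).
  move=> z hz.
  have : Fq (f z) by case: hz => ->; rewrite ?(FqN qodd cardL).
  case/preFq => [[zF fz]|[zq fz]].
    case: hz => hz.
      have : z ^+ 2 = cc ^+ 2 by apply: (mulfI hap); rewrite -fz hz cc2.
      by case/sq_cases => ze; split => //; rewrite ze !inE eqxx ?orbT.
    have : (z / cc) ^+ 2 = -1.
      have z2 : z ^+ 2 = - cc ^+ 2 by apply: (mulfI hap); rewrite -fz hz mulrN cc2.
      by rewrite expr_div_n z2 mulNr mulfV ?expf_neq0.
    by move/eqP; rewrite (negbTE (m1_nsq (FqMl zF cF))).
  case: hz => hz.
    have : z ^+ 2 = d ^+ 2 by apply: (mulfI ham); rewrite -fz hz hd ct.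
    by case/sq_cases => ze; split => //; rewrite ze !inE eqxx ?orbT.
  have : z ^+ 2 = (b0^-1) ^+ 2.
    apply: (mulfI ham); rewrite -fz hz exprVn b0sq; field.
    by rewrite ?ap1 ?am1' //; rewrite subr_eq0 eq_sym sqrf_eq1 negb_or a1 am1.
  have binv : Fq (b0^-1) by apply: FqV.
  case/sq_cases => e.
    have : z = - z by rewrite -zq /inFq e (eqP binv).
    by move/(xeqN qodd cardL) => z0; move: hz; rewrite z0 f0 => /eqP; rewrite eq_sym oppr_eq0 (negbTE cnz).
  have : z = - z by rewrite -zq e (frN qodd cardL) (eqP binv).
  by move/(xeqN qodd cardL) => z0; move: hz; rewrite z0 f0 => /eqP; rewrite eq_sym oppr_eq0 (negbTE cnz).
have nc : cc != - cc by apply/eqP => e; move: cnz; rewrite (xeqN qodd cardL e) eqxx.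
exists (- cc), d, (- d); split.
- rewrite /= !inE !negb_or nc (neq_Fq cF dnF) (neq_Fq cF mdnF).
  rewrite (neq_Fq (FqN qodd cardL cF) dnF) (neq_Fq (FqN qodd cardL cF) mdnF) /=.
  have ndd : d != - d by apply/eqP => e; move: d0; rewrite (xeqN qodd cardL e) eqxx.
  by rewrite ndd.
- move=> y; apply/idP/idP.
    move=> hc.
    have hA : forall x : L, (x \in [:: cc; - cc; d; - d]) = (f x \in [:: cc; - cc; d; - d]).
      move=> x; apply/idP/idP.
        by rewrite !inE => /or4P [] /eqP ->; rewrite ?fc ?fmc ?fd ?fmd eqxx.
      rewrite !inE => /or4P [] /eqP e.
      + by case: (pre x (or_introl e)); rewrite !inE.
      + by case: (pre x (or_intror e)); rewrite !inE.
      + by move: (@NP _ x dq d0); rewrite e eqxx.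
      by move: (@NP _ x mdq md0); rewrite e eqxx.
    by rewrite -(closedP hA hc) !inE eqxx.
  rewrite !inE => /or4P [] /eqP ->; first exact: connect0.
  + by rewrite fcomp_sym -{2}fmc fcomp_edge.
  + by rewrite fcomp_sym -{1}fd fcomp_edge.
  by rewrite fcomp_sym -{1}fmd fcomp_edge.
- by [].
move=> z; split.
- apply/eqP => e; by case: (pre z (or_intror e)) => e1 _; move: nc; rewrite -{1}e1 e eqxx.
- exact: (@NP _ z dq d0).
exact: (@NP _ z mdq md0).
Qed.

End Sone.


Section Stwo.
Hypothesis s2 : (2 <= s)%N.
Local Notation M := (2 ^ s.+1)%N.

Lemma M_gt0 : (0 < M)%N.
Proof. by rewrite expn_gt0. Qed.

Lemma M_dvd : (M %| Nq L)%N.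
Proof.
rewrite (Nq_eq qodd cardL) qsr expnSr -mulnA dvdn_pmul2l ?expn_gt0 //.
by apply: dvdn_mull; rewrite dvdn2 /= negbK.
Qed.

Lemma omega_ex : exists w : L, M.-primitive_root w.
Proof.
have [g hg] := prim_gen qodd cardL.
by exists (g ^+ (Nq L %/ M)); exact: (dvdn_prim_root hg M_dvd).
Qed.

Lemma cc2 : (a + 1) * cc ^+ 2 = cc.
Proof. by rewrite -f_Fq ?cFq // fc. Qed.

Section Omega.
Variable w : L.
Hypothesis hw : M.-primitive_root w.

Lemma w0 : w != 0.
Proof.
apply/eqP => e; have := prim_expr_order hw; rewrite e expr0n expn_eq0 /=.
by move/eqP; rewrite eq_sym oner_eq0.
Qed.

Lemma wS : w ^+ (2 ^ s) = -1.
Proof.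
have h : (w ^+ (2 ^ s)) ^+ 2 = 1 by rewrite -exprM -expnSr prim_expr_order.
move/eqP: h; rewrite sqrf_eq1 => /orP [] /eqP // h.
have := prim_order_dvd hw (2 ^ s); rewrite h eqxx => /dvdn_leq.
by rewrite expn_gt0 leq_exp2l // ltnn => /(_ isT).
Qed.

Lemma wq : w ^+ q = - w.
Proof.
have -> : q = (2 ^ s * r).+1 by rewrite -qsr prednK // (q_gt0 qodd).
by rewrite exprS exprM wS -signr_odd rodd expr1 mulrN1.
Qed.

Lemma wiq i : (w ^+ i) ^+ q = (-1) ^+ i * w ^+ i.
Proof. by rewrite exprAC wq (exprNn w). Qed.

Lemma w_even i : ~~ odd i -> Fq (w ^+ i).
Proof. by move=> h; rewrite /inFq wiq -signr_odd (negbTE h) expr0 mul1r. Qed.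

Lemma w_odd i : odd i -> (w ^+ i) ^+ q = - w ^+ i.
Proof. by move=> h; rewrite wiq -signr_odd h expr1 mulN1r. Qed.

Local Notation ii := (w ^+ (2 ^ s.-1)).

Lemma ii2 : ii ^+ 2 = -1.
Proof. by rewrite -exprM -expnSr prednK ?wS // (leq_trans _ s2). Qed.

Lemma iiF : Fq ii.
Proof.
apply: w_even; rewrite oddX /= orbF.
by case: s s2 => [|[|]].
Qed.

Local Notation dd := ((ii * b0)^-1).

Lemma dF : Fq dd.
Proof. by apply: FqV; apply: FqM => //; apply: iiF. Qed.

Lemma ii0 : ii != 0.
Proof. by rewrite expf_neq0 // w0. Qed.

Lemma d0 : dd != 0.
Proof. by rewrite invr_eq0 mulf_neq0 ?ii0 // b00. Qed.

Lemma dsq : (a - 1) * dd ^+ 2 = cc.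
Proof.
rewrite exprVn exprMn ii2 b0sq.
have -> : -1 * (1 - a ^+ 2) = (a - 1) * (a + 1) by ring.
by rewrite invfM mulrA mulfV ?am1' // mul1r.
Qed.

Definition psi (i : nat) := if odd i then dd * w ^+ i else cc * w ^+ i.

Lemma psi0 : psi 0 = cc.
Proof. by rewrite /psi /= expr0 mulr1. Qed.

Lemma psi_nz i : psi i != 0.
Proof.
rewrite /psi; case: ifP => _; rewrite mulf_neq0 ?expf_neq0 ?w0 ?d0 ?c0 //.
Qed.

Lemma psi_even i : ~~ odd i -> Fq (psi i).
Proof. by move=> h; rewrite /psi (negbTE h); apply: FqM; [apply: cFq|apply: w_even]. Qed.

Lemma psi_odd i : odd i -> (psi i) ^+ q = - psi i.
Proof. by move=> h; rewrite /psi h exprMn (eqP dF) w_odd // mulrN. Qed.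

Lemma f_psi i : f (psi i) = psi (2 * i)%N.
Proof.
have e2 : odd (2 * i)%N = false by rewrite oddM.
case oi: (odd i).
  rewrite f_anti ?psi_odd // /psi oi e2 exprMn mulrA dsq -exprM mulnC //.
rewrite f_Fq ?psi_even ?oi // /psi oi e2 exprMn mulrA cc2 -exprM mulnC //.
Qed.

Lemma psi_mod i j : (i = j %[mod M])%N -> psi i = psi j.
Proof.
move=> e.
have d2 : (2 %| M)%N by rewrite expnS dvdn_mulr.
have oij : odd i = odd j.
  have : (i %% 2 = j %% 2)%N by rewrite -(modn_dvdm i d2) -(modn_dvdm j d2) e.
  by rewrite !modn2; case: (odd i); case: (odd j).
have wij : w ^+ i = w ^+ j by apply/eqP; rewrite (eq_prim_root_expr hw) e.
by rewrite /psi oij wij.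
Qed.

Lemma psi_inj i j : psi i = psi j -> (i = j %[mod M])%N.
Proof.
move=> e.
have oij : odd i = odd j.
  case oi: (odd i); case oj: (odd j) => //.
    have h1 := psi_odd oi; have := psi_even (negbT oj).
    rewrite /inFq -e h1 => /eqP /esym /(xeqN qodd cardL) /eqP.
    by rewrite (negbTE (psi_nz i)).
  have h1 := psi_odd oj; have := psi_even (negbT oi).
  rewrite /inFq e h1 => /eqP /esym /(xeqN qodd cardL) /eqP.
  by rewrite (negbTE (psi_nz j)).
move: e; rewrite /psi oij; case: (odd j) => /mulfI.
  by move=> /(_ d0) /eqP; rewrite (eq_prim_root_expr hw) => /eqP.
by move=> /(_ c0) /eqP; rewrite (eq_prim_root_expr hw) => /eqP.
Qed.

Lemma root_w i (u : L) : ~~ odd i -> u ^+ 2 = w ^+ i -> exists j, u = w ^+ j.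
Proof.
move=> oi hu.
have : u ^+ M = 1.
  rewrite expnS exprM hu -exprM; apply/eqP; rewrite -(prim_order_dvd hw).
  by rewrite expnS dvdn_pmul2r ?expn_gt0 // dvdn2.
by case/(prim_rootP hw) => j ->; exists j.
Qed.

Lemma pre_psi z i : f z = psi i -> exists j, z = psi j.
Proof.
move=> e.
case oi: (odd i).
  by have := @NP (psi i) z (psi_odd oi) (psi_nz i); rewrite e eqxx.
have FF : Fq (f z) by rewrite e psi_even ?oi.
case/preFq: FF => [[zF fz]|[zq fz]].
  have z2 : z ^+ 2 = cc ^+ 2 * w ^+ i.
    by apply: (mulfI ap1); rewrite -fz e /psi oi mulrA cc2.
  have u2 : (z / cc) ^+ 2 = w ^+ i.
    by rewrite expr_div_n z2 [cc ^+ 2 * _]mulrC mulfK // expf_neq0 // c0.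
  have [j ej] := root_w (negbT oi) u2.
  have zj : z = cc * w ^+ j by rewrite -ej mulrC divfK // c0.
  case oj: (odd j).
    have := FqMl zF cFq; rewrite ej /inFq w_odd // => /eqP /esym /(xeqN qodd cardL) /eqP.
    by rewrite expf_eq0 (negbTE w0) andbF.
  by exists j; rewrite /psi oj.
have z0 : z != 0.
  by apply/eqP => z0; move: e; rewrite z0 f0 => /esym /eqP; rewrite (negbTE (psi_nz i)).
have z2 : z ^+ 2 = dd ^+ 2 * w ^+ i.
  by apply: (mulfI am1'); rewrite -fz e /psi oi mulrA dsq.
have u2 : (z / dd) ^+ 2 = w ^+ i.
  by rewrite expr_div_n z2 [dd ^+ 2 * _]mulrC mulfK // expf_neq0 // d0.
have [j ej] := root_w (negbT oi) u2.
have zj : z = dd * w ^+ j by rewrite -ej mulrC divfK // d0.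
case oj: (odd j); first by exists j; rewrite /psi oj.
have : Fq z by rewrite zj; apply: FqM; [apply: dF|apply: w_even; rewrite oj].
rewrite /inFq zq => /eqP /esym /(xeqN qodd cardL) /eqP.
by rewrite (negbTE z0).
Qed.

Lemma conn_psi i : fcomp f cc (psi i).
Proof.
have h n : fcomp f (psi i) (psi (2 ^ n * i)%N).
  elim: n => [|n IH]; first by rewrite expn0 mul1n; apply: connect0.
  apply: fcomp_trans IH _; rewrite expnS -mulnA -f_psi; exact: fcomp_edge.
rewrite fcomp_sym; have := h s.+1.
by rewrite (@psi_mod (2 ^ s.+1 * i)%N 0) ?psi0 // mulnC modnMl mod0n.
Qed.

Lemma comp_psi y : fcomp f cc y -> exists2 j, (j < M)%N & y = psi j.
Proof.
move=> hc.
pose A := fun x => [exists j : 'I_M, x == psi j].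
have hA : forall x, A x = A (f x).
  move=> x; apply/existsP/existsP => [[j /eqP ->]|[j /eqP e]].
    exists (Ordinal (ltn_pmod (2 * j) M_gt0)); rewrite f_psi; apply/eqP/psi_mod.
    by rewrite /= modn_mod.
  have [j' ->] := pre_psi e.
  exists (Ordinal (ltn_pmod j' M_gt0)); apply/eqP/psi_mod.
  by rewrite /= modn_mod.
have Ac : A cc by apply/existsP; exists (Ordinal M_gt0); rewrite psi0.
have := closedP hA hc; rewrite Ac => /esym /existsP [j /eqP ->].
by exists (val j) => //; apply: ltn_ord.
Qed.

Lemma item7_w : iso_cycT f (fcomp f cc) s.+1.
Proof.
exists (fun v => psi (Ev s v)); split.
- move=> v1 v2 h1 h2 /psi_inj e.
  apply: (E_inj h1 h2).
  by rewrite -(modn_small (E_lt h1)) -(modn_small (E_lt h2)).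
- by move=> v hv; apply: conn_psi.
- move=> y /comp_psi [j hj ->].
  by have [v hv e] := E_surj hj; exists v => //; rewrite e.
- by move=> v hv; rewrite f_psi; apply: psi_mod; apply: E_map.
Qed.

End Omega.

Lemma item7 : iso_cycT f (fcomp f cc) s.+1.
Proof. by have [w hw] := omega_ex; apply: item7_w hw. Qed.

End Stwo.


Lemma main_all :
  (forall x, Fq x -> Fq (f x) /\ f x = (a + 1) * x ^+ 2) /\
  (forall y, [exists x, Fq x && fcomp f x y] -> ~~ Fq y ->
     [/\ Fq (f y), chi2 q (f y * (a - 1)) = -1 & forall z, f z != y]) /\
  (forall al, Fq al -> chi2 q (al * (a - 1)) = -1 ->
     #|[set y | ~~ Fq y & f y == al]| = 2%N) /\
  (f 0 = 0 /\ forall y, fcomp f 0 y -> y = 0) /\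
  f cc = cc /\
  ((s = 1)%N -> exists y1 y2 y3 : L,
     [/\ uniq [:: cc; y1; y2; y3],
         (forall y, fcomp f cc y = (y \in [:: cc; y1; y2; y3])),
         [/\ f y1 = cc, f y2 = cc & f y3 = cc] &
         (forall z, [/\ f z != y1, f z != y2 & f z != y3])]) /\
  ((2 <= s)%N -> iso_cycT f (fcomp f cc) s.+1).
Proof.
split; first by move=> x hx; split; [apply: Fq_ff | apply: f_Fq].
split.
  move=> y /existsP [x /andP [hx hc]]; apply: item2; exists x; split => //.
split; first exact: item3.
split; first exact: item4.
split; first exact: fc.
split; first exact: item6.
exact: item7.
Qed.

End Main.

Unset Implicit Arguments.
Set Strict Implicit.

Theorem theorem22 (L : finFieldType) (q s r : nat) (a : L) :
  odd q -> #|L| = (q ^ 2)%N ->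
  odd r -> q.-1 = (2 ^ s * r)%N ->
  inFq q a -> a != 0 -> a != 1 -> a != -1 ->
  chi2 q (1 - a ^+ 2) = 1 ->
  let f := fun x : L => x ^+ q.+1 + a * x ^+ 2 in
  let U := fun y : L => [exists x, inFq q x && fcomp f x y] in
  let c := (a + 1)^-1 in
  (forall x, inFq q x -> inFq q (f x) /\ f x = (a + 1) * x ^+ 2) /\
      (forall y, U y -> ~~ inFq q y ->
         [/\ inFq q (f y), chi2 q (f y * (a - 1)) = -1 & forall z, f z != y]) /\
      (forall al, inFq q al -> chi2 q (al * (a - 1)) = -1 ->
         #|[set y | ~~ inFq q y & f y == al]| = 2%N) /\
      (f 0 = 0 /\ forall y, fcomp f 0 y -> y = 0) /\
      f c = c /\
      ((s = 1)%N -> exists y1 y2 y3 : L,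
         [/\ uniq [:: c; y1; y2; y3],
             (forall y, fcomp f c y = (y \in [:: c; y1; y2; y3])),
             [/\ f y1 = c, f y2 = c & f y3 = c] &
             (forall z, [/\ f z != y1, f z != y2 & f z != y3])]) /\
      ((2 <= s)%N -> iso_cycT f (fcomp f c) s.+1).
Proof.
move=> qodd cardL rodd qsr aFq a0 a1 am1 hchi f U c.
have [b0 [b0Fq b0sq]] := chi2_posE hchi.
exact: (main_all qodd cardL aFq a0 a1 am1 b0Fq b0sq rodd qsr).
Qed.
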